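(* Let $\mathcal H_A,\mathcal H_B$ be Hilbert spaces of dimension $N$, let $\rho_{AB}$ be a density operator on $\mathcal H_A\otimes\mathcal H_B$, and let $X$ be a projective measurement on $A$ given by an orthonormal basis $\{|x_i\rangle\}_{i=1}^N$ of $\mathcal H_A$. For every projective measurement $X'$ on $B$, given by an orthonormal basis $\{|x'_\mu\rangle\}_{\mu=1}^N$ of $\mathcal H_B$, let $\vec p(x|x')\in\mathbb R^N$ be the majorized marginal distribution defined in the context. Then there exists a unique least upper bound $\vec s^{\,(x)}$, with respect to the majorization order, of the set $\{\vec p(x|x') : X'\}$; in particular $\vec p(x|x')\prec \vec s^{\,(x)}$ for all $X'$. Moreover $\vec s^{\,(x)}$ depends only on $X$ and $\rho_{AB}$ and is given by $$\vec s^{\,(x)}=\vec p(x|x'^{(1)})\vee \vec p(x|x'^{(2)})\vee\cdots\vee \vec p(x|x'^{(N)}),$$ where for each $k\in\{1,\dots,N\}$, $X'^{(k)}$ is a measurement on $B$ for which $\sum_{i=1}^k p_i(x|x'^{(k)})=\max_{X'}\sum_{i=1}^k p_i(x|x')$ (components listed in descending order).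
   Context: Joint distribution: $P_{i\mu}(X,X')=\langle x_i|\otimes\langle x'_\mu|\,\rho_{AB}\,|x_i\rangle\otimes|x'_\mu\rangle$. For each $\mu$, let $\vec p^{\,(\mu)}(x)=(P_{1\mu},\dots,P_{N\mu})$ and let $\vec p^{\,(\mu)\downarrow}(x)$ denote this vector with components rearranged in descending order. The majorized marginal distribution is $\vec p(x|x')=\sum_{\mu=1}^N \vec p^{\,(\mu)\downarrow}(x)$ (a probability vector with components in descending order). Majorization: for $\vec a,\vec b\in\mathbb R^N$ with components sorted in descending order, $\vec a\prec\vec b$ means $\sum_{i=1}^k a_i\le\sum_{i=1}^k b_i$ for all $k=1,\dots,N$, with equality for $k=N$. On the set of descending-ordered probability vectors, $\prec$ is a lattice order, and $\vec a\vee\vec b$ denotes the join (least upper bound) of $\vec a$ and $\vec b$ in this majorization lattice. *)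

(* Defs.v *)
From HB Require Import structures.
From mathcomp Require Import all_boot all_order all_algebra.
From mathcomp Require Import reals.
From mathcomp Require Import complex mxtens.
From Stdlib Require Import ClassicalEpsilon.

Set Implicit Arguments.
Unset Strict Implicit.
Unset Printing Implicit Defensive.

Import Order.TTheory GRing.Theory Num.Theory.
Local Open Scope ring_scope.

Section Defs.
Variable R : realType.
Local Notation C := R[i].

Definition adjmx m n (A : 'M[C]_(m, n)) : 'M[C]_(n, m) := (map_mx Num.conj A)^T.

Definition unitary_mx N (U : 'M[C]_N) : Prop := adjmx U *m U = 1%:M.

Definition density_op M (rho : 'M[C]_M) : Prop :=
  [/\ adjmx rho = rho,
      (forall v : 'cV[C]_M, 0 <= (adjmx v *m rho *m v) 0 0)
    & \tr rho = 1].

(* joint distribution P_{i mu} = <x_i| (x) <x'_mu| rho |x_i> (x) |x'_mu>,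
   where |x_i> = i-th column of U and |x'_mu> = mu-th column of V *)
Definition joint_prob N (rho : 'M[C]_(N * N)) (U V : 'M[C]_N) (i mu : 'I_N) : R :=
  let w : 'cV[C]_(N * N) := col i U *t col mu V in
  complex.Re ((adjmx w *m rho *m w) 0 0).

Definition desc_sort N (v : 'rV[R]_N) : 'rV[R]_N :=
  \row_(i < N) nth 0 (sort (fun x y => y <= x) [seq v 0 j | j <- enum 'I_N]) i.

Definition maj_marginal N (rho : 'M[C]_(N * N)) (U V : 'M[C]_N) : 'rV[R]_N :=
  \sum_(mu < N) desc_sort (\row_(i < N) joint_prob rho U V i mu).

Definition psum N (a : 'rV[R]_N) (k : nat) : R := \sum_(i < N | (i < k)%N) a 0 i.

(* descending-ordered probability vectors: the carrier of the majorization lattice *)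
Definition desc_prob N (a : 'rV[R]_N) : Prop :=
  [/\ forall i j : 'I_N, (i <= j)%N -> a 0 j <= a 0 i,
      forall i, 0 <= a 0 i
    & \sum_(i < N) a 0 i = 1].

Definition majorized N (a b : 'rV[R]_N) : Prop :=
  (forall k, (k <= N)%N -> psum a k <= psum b k) /\ psum a N = psum b N.

Definition maj_lub N (S : 'rV[R]_N -> Prop) (s : 'rV[R]_N) : Prop :=
  [/\ desc_prob s,
      (forall a, S a -> majorized a s)
    & forall t, desc_prob t -> (forall a, S a -> majorized a t) -> majorized s t].

Definition maj_join N (a b : 'rV[R]_N) : 'rV[R]_N :=
  epsilon (inhabits 0) (maj_lub (fun c => c = a \/ c = b)).

End Defs.

(* Main.v *)
Require Import Defs.
From HB Require Import structures.
From mathcomp Require Import all_boot all_order all_algebra all_fingroup.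
From mathcomp Require Import reals.
From mathcomp Require Import complex mxtens.
From mathcomp Require Import classical_sets boolp topology normedtype derive.
Import numFieldNormedType.Exports.
From Stdlib Require Import ClassicalEpsilon.
From mathcomp Require Import lra.

Set Implicit Arguments.
Unset Strict Implicit.
Unset Printing Implicit Defensive.
Import Order.TTheory GRing.Theory Num.Theory.
Local Open Scope ring_scope.
Section Part1.
Variable R : realType.

Lemma desc_sort_perm N (v : 'rV[R]_N) :
  exists p : 'S_N, forall j, desc_sort v 0 j = v 0 (p j).
Proof.
set l := [seq v 0 j | j <- enum 'I_N].
have tl : size l == N by rewrite size_map size_enum_ord.
have : perm_eq (sort (fun x y : R => y <= x) l) (Tuple tl).
  by rewrite /= perm_sort.
case/tuple_permP => p Hp; exists p => j.
rewrite /desc_sort mxE Hp.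
rewrite (nth_map j); last by rewrite size_enum_ord.
rewrite nth_ord_enum (tnth_nth 0) /= /l (nth_map j) ?size_enum_ord //.
by rewrite nth_ord_enum.
Qed.

Lemma desc_sort_desc N (v : 'rV[R]_N) (i j : 'I_N) :
  (i <= j)%N -> desc_sort v 0 j <= desc_sort v 0 i.
Proof.
move=> ij; rewrite /desc_sort !mxE.
set l := [seq v 0 j | j <- enum 'I_N].
have ss : sorted (fun x y : R => y <= x) (sort (fun x y : R => y <= x) l).
  by apply: sort_sorted => x y; apply: le_total.
have sz : size (sort (fun x y : R => y <= x) l) = N.
  by rewrite size_sort size_map size_enum_ord.
have tr : transitive (fun x y : R => y <= x).
  by move=> x y z /= h1 h2; apply: le_trans h2 h1.
have rf : reflexive (fun x y : R => y <= x) by move=> x /=.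
apply: (sorted_leq_nth tr rf 0 ss) => //; by rewrite inE sz.
Qed.

End Part1.
Section Part2.
Variable R : realType.
Variable N : nat.
Implicit Types a s : 'rV[R]_N.

Lemma psum0 a : psum a 0 = 0.
Proof. by rewrite /psum big_pred0. Qed.

Lemma psumS a k (hk : (k < N)%N) : psum a k.+1 = psum a k + a 0 (Ordinal hk).
Proof.
rewrite /psum (bigD1 (Ordinal hk)) //= addrC; congr (_ + _).
by apply: eq_bigl => j; rewrite ltnS -val_eqE /= ltn_neqAle andbC.
Qed.

Lemma psumN a k : (N <= k)%N -> psum a k = \sum_i a 0 i.
Proof. by move=> hk; apply: eq_bigl => j; rewrite (leq_trans (ltn_ord j) hk). Qed.

Definition is_desc s := forall i j : 'I_N, (i <= j)%N -> s 0 j <= s 0 i.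

Lemma topk s (Hs : is_desc s) (g : 'I_N -> 'I_N) (ginj : injective g) (k : 'I_N) :
  \sum_(j < N | (j < k.+1)%N) s 0 (g j) <= psum s k.+1.
Proof.
set c := s 0 k.
pose F (x : R) := Num.max (x - c) 0.
have F0 x : 0 <= F x by rewrite /F le_max lexx orbT.
have step1 : \sum_(j < N | (j < k.+1)%N) s 0 (g j)
   <= \sum_(j < N | (j < k.+1)%N) c + \sum_(j < N | (j < k.+1)%N) F (s 0 (g j)).
  rewrite -big_split /=; apply: ler_sum => j _.
  by rewrite -lerBlDl /F le_max lexx.
apply: (le_trans step1).
have step2 : \sum_(j < N | (j < k.+1)%N) F (s 0 (g j)) <= \sum_j F (s 0 j).
  rewrite [X in _ <= X](reindex_inj ginj) /=.
  rewrite [X in _ <= X](bigID (fun j : 'I_N => (j < k.+1)%N)) /= lerDl.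
  by apply: sumr_ge0.
have step3 : \sum_j F (s 0 j) = \sum_(j < N | (j < k.+1)%N) (s 0 j - c).
  rewrite (bigID (fun j : 'I_N => (j < k.+1)%N)) /=.
  rewrite [X in _ + X]big1 ?addr0.
    apply: eq_bigr => j hj; rewrite /F max_l //.
    by rewrite subr_ge0; apply: Hs; rewrite -ltnS.
  move=> j hj; rewrite /F max_r // subr_le0; apply: Hs.
  by move: hj; rewrite ltnS -ltnNge => /ltnW.
apply: (le_trans (lerD (lexx _) step2)); rewrite step3 -big_split /=.
rewrite le_eqVlt; apply/orP; left; apply/eqP/eq_bigr => j _; by rewrite addrC subrK.
Qed.

End Part2.
Section Part3.
Variable R : realType.
Variable N : nat.
Hypothesis N_gt0 : (0 < N)%N.
Implicit Types a s t : 'rV[R]_N.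

Definition prob a := (forall i, 0 <= a 0 i) /\ \sum_i a 0 i = 1.

Lemma desc_prob_prob a : desc_prob a -> prob a.
Proof. by case. Qed.

Lemma psum_ge0 a k : prob a -> 0 <= psum a k.
Proof. by case=> h _; apply: sumr_ge0 => i _; apply: h. Qed.

Lemma psum_le_tot a k : prob a -> psum a k <= \sum_i a 0 i.
Proof.
case=> h _; rewrite [X in _ <= X](bigID (fun j : 'I_N => (j < k)%N)) /= lerDl.
by apply: sumr_ge0 => i _; apply: h.
Qed.

Lemma psum_le1 a k : prob a -> psum a k <= 1.
Proof. by move=> pa; have := psum_le_tot k pa; case: pa => _ ->. Qed.

Lemma psum_tot a : prob a -> psum a N = 1.
Proof. by case=> _ <-; apply: psumN. Qed.

Lemma maj_refl a : majorized a a.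
Proof. by split. Qed.

Lemma maj_trans a b c : majorized a b -> majorized b c -> majorized a c.
Proof.
case=> h1 e1 [h2 e2]; split; last by rewrite e1.
by move=> k hk; apply: le_trans (h1 k hk) (h2 k hk).
Qed.

Lemma maj_antisym a b : majorized a b -> majorized b a -> a = b.
Proof.
case=> h1 _ [h2 _]; apply/rowP => j.
have E k : (k <= N)%N -> psum a k = psum b k.
  by move=> hk; apply/le_anti; rewrite h1 // h2.
have hj := ltn_ord j.
have := E j.+1 hj; rewrite !(psumS _ hj) (E j (ltnW hj)) => /addrI.
by have -> : Ordinal hj = j by apply: val_inj.
Qed.

Definition e0 : 'rV[R]_N := \row_(i < N) ((i : nat) == 0%N)%:R.

Lemma e0_desc_prob : desc_prob e0.
Proof.
split.
- move=> i j ij; rewrite !mxE; case: (j : nat) ij => [|j'] /=.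
    by rewrite leqn0 => /eqP ->.
  by move=> _; case: (_ == _).
- by move=> i; rewrite mxE; case: (_ == _).
- rewrite (bigD1 (Ordinal N_gt0)) //= mxE eqxx big1 ?addr0 // => j hj.
  rewrite mxE; case: eqP => // h; case/eqP: hj; exact: val_inj.
Qed.

Lemma maj_e0 a : prob a -> majorized a e0.
Proof.
move=> pa; split; last by rewrite psum_tot // psum_tot //; apply: desc_prob_prob; apply: e0_desc_prob.
move=> [|k] hk; first by rewrite !psum0.
apply: le_trans (psum_le1 k.+1 pa) _.
rewrite /psum (bigD1 (Ordinal N_gt0)) //= mxE eqxx lerDl.
by apply: sumr_ge0 => i _; rewrite mxE; case: (_ == _).
Qed.

Lemma maj_lub_ext (S1 S2 : 'rV[R]_N -> Prop) s :
  (forall c, S1 c <-> S2 c) -> maj_lub S1 s -> maj_lub S2 s.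
Proof.
move=> E [h1 h2 h3]; split => //.
- by move=> a /E; apply: h2.
- by move=> t ht hub; apply: h3 => // a /E; apply: hub.
Qed.

Lemma maj_lub_unique (S : 'rV[R]_N -> Prop) s1 s2 :
  maj_lub S s1 -> maj_lub S s2 -> s1 = s2.
Proof.
case=> a1 b1 c1 [a2 b2 c2]; apply: maj_antisym.
- exact: c1.
- exact: c2.
Qed.

Lemma desc_step (f : nat -> R) :
  (forall i, (i.+1 < N)%N -> f i.+1 <= f i) ->
  forall i j, (i <= j)%N -> (j < N)%N -> f j <= f i.
Proof.
move=> h i j ij jN; elim: j ij jN => [|j IH] ij jN.
  by move: ij; rewrite leqn0 => /eqP ->.
case: (ltngtP i j.+1) ij => // [|-> _]; last by [].
rewrite ltnS => ij _; apply: le_trans (h _ jN) (IH ij (ltnW jN)).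
Qed.

Lemma lub_exists (S : 'rV[R]_N -> Prop) :
  (forall a, S a -> prob a) -> exists s, maj_lub S s.
Proof.
move=> HS.
pose UB t := desc_prob t /\ forall a, S a -> majorized a t.
have UBe0 : UB e0 by split; [apply: e0_desc_prob | move=> a /HS; apply: maj_e0].
pose E k : set R := fun x => exists t, UB t /\ x = psum t k.
pose d k := inf (E k).
have En k : exists x, E k x by exists (psum e0 k), e0.
have Elb k : has_lbound (E k).
  exists 0 => x [t [[/desc_prob_prob pt _] ->]]; exact: psum_ge0.
have d_le t k : UB t -> d k <= psum t k.
  by move=> ut; apply: (ge_inf (Elb k)); exists t.
have le_d k x : (forall t, UB t -> x <= psum t k) -> x <= d k.
  by move=> h; apply: lb_le_inf => // y [t [ut ->]]; apply: h.
have d0 : d 0%N = 0.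
  apply/le_anti; rewrite (le_trans (d_le e0 _ UBe0)) ?psum0 //=.
  by apply: le_d => t _; rewrite psum0.
have dN : d N = 1.
  apply/le_anti; rewrite (le_trans (d_le e0 _ UBe0)) /=; last first.
    by rewrite psum_tot //; apply: desc_prob_prob; apply: e0_desc_prob.
  by apply: le_d => t [/desc_prob_prob pt _]; rewrite psum_tot.
pose s : 'rV[R]_N := \row_(i < N) (d i.+1 - d i).
have psum_s k : (k <= N)%N -> psum s k = d k.
  elim: k => [|k IH] hk; first by rewrite psum0 d0.
  by rewrite (psumS _ hk) IH ?(ltnW hk) // mxE /= addrC subrK.
have conc i : (i.+1 < N)%N -> d i.+2 - d i.+1 <= d i.+1 - d i.
  move=> hi.
  suff : (d i + d i.+2) / 2 <= d i.+1.
    by move=> h; lra.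
  apply: le_d => t ut; case: (ut) => [[tdesc _ _] _].
  have hi1 : (i < N)%N by apply: ltnW.
  have ti : psum t i.+2 = psum t i + t 0 (Ordinal hi1) + t 0 (Ordinal hi).
    by rewrite (psumS _ hi) (psumS _ hi1).
  have tle : t 0 (Ordinal hi) <= t 0 (Ordinal hi1) by apply: tdesc => /=.
  have u1 := d_le t i ut; have u2 := d_le t i.+2 ut.
  rewrite ti in u2; rewrite (psumS _ hi1); lra.
have sdesc : forall i j : 'I_N, (i <= j)%N -> s 0 j <= s 0 i.
  move=> i j ij; rewrite !mxE.
  by apply: (desc_step (f := fun i => d i.+1 - d i)) => // k hk; apply: conc.
have Nm1 : (N.-1 < N)%N by rewrite prednK.
have s_ge0 : forall i, 0 <= s 0 i.
  move=> i; apply: le_trans (sdesc i (Ordinal Nm1) _); last by rewrite /= -ltnS prednK.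
  rewrite mxE /= prednK // dN subr_ge0.
  apply: le_trans (d_le e0 _ UBe0) _; apply: psum_le1.
  by apply: desc_prob_prob; apply: e0_desc_prob.
have s_sum : \sum_i s 0 i = 1 by rewrite -(psumN s (leqnn N)) psum_s.
exists s; split.
- by split.
- move=> a Sa; split; last by rewrite psum_s // dN psum_tot //; apply: HS.
  move=> k hk; rewrite psum_s //; apply: le_d => t [_ ht].
  by case: (ht a Sa) => h _; apply: h.
- move=> t tdp hub; split; last first.
    by rewrite psum_s // dN psum_tot //; apply: desc_prob_prob.
  by move=> k hk; rewrite psum_s //; apply: d_le.
Qed.

Lemma join_spec a b : prob a -> prob b ->
  maj_lub (fun c => c = a \/ c = b) (maj_join a b).
Proof.
move=> pa pb; rewrite /maj_join; apply: epsilon_spec.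
by apply: lub_exists => c [->|->].
Qed.

Lemma join_lub (Q : 'rV[R]_N -> Prop) acc b :
  (forall c, Q c -> prob c) -> maj_lub Q acc -> prob b ->
  maj_lub (fun c => Q c \/ c = b) (maj_join acc b).
Proof.
move=> HQ lacc pb.
case: (lacc) => accd accub accl.
have := join_spec (desc_prob_prob accd) pb; case=> jd jub jl.
split => //.
- move=> c [Qc|->]; last by apply: jub; right.
  by apply: maj_trans (accub c Qc) _; apply: jub; left.
- move=> t td hub; apply: jl => // c [->|->]; last by apply: hub; right.
  by apply: accl => // c1 Qc; apply: hub; left.
Qed.

Lemma foldl_lub (I : eqType) (f : I -> 'rV[R]_N) (L : seq I) (Q : 'rV[R]_N -> Prop) acc :
  (forall c, Q c -> prob c) -> (forall k, prob (f k)) -> maj_lub Q acc ->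
  maj_lub (fun c => Q c \/ exists2 k, k \in L & c = f k)
          (foldl (fun acc k => maj_join acc (f k)) acc L).
Proof.
elim: L Q acc => [|k L IH] Q acc HQ Hf lacc /=.
  by apply: maj_lub_ext lacc => c; split; [left | case=> // [[k]]].
have HQ' : forall c, Q c \/ c = f k -> prob c by move=> c [/HQ //|->].
have := IH (fun c => Q c \/ c = f k) (maj_join acc (f k)) HQ' Hf (join_lub HQ lacc (Hf k)).
apply: maj_lub_ext => c; split.
- case=> [[Qc|->]|[k' k'L ->]]; first by left.
  + by right; exists k => //; rewrite inE eqxx.
  + by right; exists k' => //; rewrite inE k'L orbT.
- case=> [Qc|[k' ]]; first by left; left.
  rewrite inE => /orP [/eqP -> ->|k'L ->]; first by left; right.
  by right; exists k'.
Qed.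


End Part3.
Section Part4.
Variable R : realType.
Local Notation C := R[i].
Variable N : nat.

Lemma ReD (x y : C) : complex.Re (x + y) = complex.Re x + complex.Re y.
Proof. by case: x; case: y. Qed.

Lemma Re_sum (I : Type) (r : seq I) (P : pred I) (F : I -> C) :
  complex.Re (\sum_(i <- r | P i) F i) = \sum_(i <- r | P i) complex.Re (F i).
Proof. by apply: (big_morph _ ReD). Qed.

Lemma joint_prob_ge0 (rho : 'M[C]_(N * N)) U V i mu :
  density_op rho -> 0 <= joint_prob rho U V i mu.
Proof.
case=> _ hpos _; rewrite /joint_prob /=.
by have := hpos (col i U *t col mu V); rewrite lecE => /andP [_].
Qed.

Lemma adjmx_tens m n p q (A : 'M[C]_(m, n)) (B : 'M[C]_(p, q)) :
  adjmx (A *t B) = adjmx A *t adjmx B.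
Proof. by rewrite /adjmx map_mxT trmx_tens. Qed.

Lemma tens11 m n : (1%:M : 'M[C]_m) *t (1%:M : 'M[C]_n) = 1%:M.
Proof.
apply/matrixP => r c.
case: (mxtens_indexP r) => i j; case: (mxtens_indexP c) => k l.
rewrite tensmxE !mxE.
have -> : (mxtens_index (i, j) == mxtens_index (k, l)) = (i == k) && (j == l).
  apply/eqP/andP => [/(congr1 (@mxtens_unindex m n))|[/eqP -> /eqP ->] //].
  by rewrite !mxtens_indexK => -[-> ->].
by case: (i == k); case: (j == l); rewrite ?mulr1 ?mulr0.
Qed.

Lemma unitary_tens (U V : 'M[C]_N) :
  unitary_mx U -> unitary_mx V -> unitary_mx (U *t V).
Proof.
by rewrite /unitary_mx => hU hV; rewrite adjmx_tens tensmx_mul hU hV tens11.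
Qed.

Lemma col_tens (U V : 'M[C]_N) i mu :
  (col i U *t col mu V : 'cV[C]_(N * N)) = col (mxtens_index (i, mu)) (U *t V).
Proof.
by apply/matrixP => r c; rewrite /tensmx !mxE mxtens_indexK /=.
Qed.

Lemma quad_col M (W rho : 'M[C]_M) d :
  (adjmx (col d W) *m rho *m col d W) 0 0 = (adjmx W *m rho *m W) d d.
Proof.
rewrite !mxE; apply: eq_bigr => k _; rewrite !mxE; congr (_ * _).
by apply: eq_bigr => l _; rewrite !mxE.
Qed.

Lemma joint_prob_sum (rho : 'M[C]_(N * N)) U V :
  density_op rho -> unitary_mx U -> unitary_mx V ->
  \sum_i \sum_mu joint_prob rho U V i mu = 1.
Proof.
case=> _ _ htr hU hV.
set W := U *t V.
have hW : W *m adjmx W = 1%:M by apply: mulmx1C; apply: unitary_tens.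
rewrite pair_big /=.
rewrite (reindex (@mxtens_unindex N N)); last first.
  by exists (@mxtens_index N N) => c _; [apply: mxtens_unindexK | apply: mxtens_indexK].
transitivity (complex.Re (\tr (adjmx W *m rho *m W))); last first.
  by rewrite mxtrace_mulC mulmxA hW mul1mx htr.
rewrite /mxtrace Re_sum; apply: eq_big => [c //|c _].
case: (mxtens_indexP c) => i mu; rewrite mxtens_indexK /joint_prob /=.
by rewrite col_tens -/W quad_col.
Qed.

End Part4.
Section Part5.
Variable R : realType.
Local Notation C := R[i].
Variable N : nat.
Variable rho : 'M[C]_(N * N).
Variable U : 'M[C]_N.

Definition rowmu (V : 'M[C]_N) (mu : 'I_N) : 'rV[R]_N :=
  \row_(i < N) joint_prob rho U V i mu.

Lemma maj_entry V j :
  maj_marginal rho U V 0 j = \sum_mu desc_sort (rowmu V mu) 0 j.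
Proof. by rewrite /maj_marginal summxE. Qed.

Lemma maj_desc_prob V : density_op rho -> unitary_mx U -> unitary_mx V ->
  desc_prob (maj_marginal rho U V).
Proof.
move=> hr hU hV; split.
- move=> i j ij; rewrite !maj_entry; apply: ler_sum => mu _.
  exact: desc_sort_desc.
- move=> i; rewrite maj_entry; apply: sumr_ge0 => mu _.
  have [p ->] := desc_sort_perm (rowmu V mu).
  by rewrite mxE; apply: joint_prob_ge0.
- rewrite -(joint_prob_sum hr hU hV) exchange_big /=.
  under eq_bigr => j _ do rewrite maj_entry.
  rewrite exchange_big /=; apply: eq_bigr => mu _.
  have [p hp] := desc_sort_perm (rowmu V mu).
  under eq_bigr => j _ do rewrite hp mxE.
  by rewrite [RHS](reindex_inj (@perm_inj _ p)).
Qed.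

Lemma psum_maj V k :
  psum (maj_marginal rho U V) k = \sum_mu psum (desc_sort (rowmu V mu)) k.
Proof.
rewrite /psum exchange_big /=; apply: eq_bigr => j _; exact: maj_entry.
Qed.

Definition gS (sg : {ffun 'I_N -> 'S_N}) (k : 'I_N) (V : 'M[C]_N) : R :=
  \sum_mu \sum_(j < N | (j < k.+1)%N) joint_prob rho U V (sg mu j) mu.

Lemma gS_le sg k V : gS sg k V <= psum (maj_marginal rho U V) k.+1.
Proof.
rewrite psum_maj; apply: ler_sum => mu _.
have [p hp] := desc_sort_perm (rowmu V mu).
have hd : is_desc (desc_sort (rowmu V mu)) by move=> i j; apply: desc_sort_desc.
have E : \sum_(j < N | (j < k.+1)%N) desc_sort (rowmu V mu) 0 ((p^-1)%g (sg mu j))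
   = \sum_(j < N | (j < k.+1)%N) joint_prob rho U V (sg mu j) mu.
  by apply: eq_bigr => j _; rewrite hp permKV mxE.
rewrite -E; apply: topk => //.
by move=> x y /= /perm_inj /perm_inj.
Qed.

Lemma gS_eq (k : 'I_N) V : exists sg, psum (maj_marginal rho U V) k.+1 = gS sg k V.
Proof.
have [f hf] := fin_all_exists (fun mu => desc_sort_perm (rowmu V mu)).
exists [ffun mu => f mu]; rewrite psum_maj /gS; apply: eq_bigr => mu _.
by rewrite /psum; apply: eq_bigr => j _; rewrite hf ffunE mxE.
Qed.

End Part5.
Section Part6.
Variable R : realType.
Local Notation C := R[i].
Variable n : nat.
Local Notation X := 'rV[R]_n.

Lemma ReM (x y : C) : complex.Re (x * y) = complex.Re x * complex.Re y - complex.Im x * complex.Im y.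
Proof. by case: x; case: y. Qed.
Lemma ImM (x y : C) : complex.Im (x * y) = complex.Re x * complex.Im y + complex.Im x * complex.Re y.
Proof. by case: x => a b; case: y => c d /=; rewrite addrC. Qed.
Lemma ImD (x y : C) : complex.Im (x + y) = complex.Im x + complex.Im y.
Proof. by case: x; case: y. Qed.

Lemma contR_sum (I : Type) (r : seq I) (P : pred I) (F : I -> X -> R) :
  (forall i, continuous (F i)) -> continuous (fun x => \sum_(i <- r | P i) F i x).
Proof.
move=> h; elim: r => [|a r IH].
  have -> : (fun x => \sum_(i <- [::] | P i) F i x) = (fun=> 0) by apply: funext => x; rewrite big_nil.
  exact: cst_continuous.
have -> : (fun x => \sum_(i <- a :: r | P i) F i x) =
          (fun x => (if P a then F a x else 0) + \sum_(i <- r | P i) F i x).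
  by apply: funext => x; rewrite big_cons; case: (P a); rewrite ?add0r.
move=> x; apply: continuousD; last exact: IH.
case: (P a); first exact: h.
exact: cst_continuous.
Qed.

Definition contC (f : X -> C) :=
  continuous (fun x => complex.Re (f x)) /\ continuous (fun x => complex.Im (f x)).

Lemma contC_cst c : contC (fun=> c).
Proof. by split; apply: cst_continuous. Qed.

Lemma contC_add f g : contC f -> contC g -> contC (fun x => f x + g x).
Proof.
case=> f1 f2 [g1 g2]; split.
- have -> : (fun x => complex.Re (f x + g x)) = (fun x => complex.Re (f x) + complex.Re (g x)).
    by apply: funext => x; rewrite ReD.
  by move=> x; apply: continuousD; [exact: f1 | exact: g1].
- have -> : (fun x => complex.Im (f x + g x)) = (fun x => complex.Im (f x) + complex.Im (g x)).
    by apply: funext => x; rewrite ImD.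
  by move=> x; apply: continuousD; [exact: f2 | exact: g2].
Qed.

Lemma contC_mul f g : contC f -> contC g -> contC (fun x => f x * g x).
Proof.
case=> f1 f2 [g1 g2]; split.
- have -> : (fun x => complex.Re (f x * g x)) =
     (fun x => complex.Re (f x) * complex.Re (g x) - complex.Im (f x) * complex.Im (g x)).
    by apply: funext => x; rewrite ReM.
  move=> x.
  have h1 : {for x, continuous (fun x => complex.Re (f x) * complex.Re (g x))}.
    by apply: continuousM; [exact: f1|exact: g1].
  have h2 : {for x, continuous (fun x => - (complex.Im (f x) * complex.Im (g x)))}.
    by apply: continuousN; apply: continuousM; [exact: f2|exact: g2].
  exact: (continuousD h1 h2).
- have -> : (fun x => complex.Im (f x * g x)) =
     (fun x => complex.Re (f x) * complex.Im (g x) + complex.Im (f x) * complex.Re (g x)).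
    by apply: funext => x; rewrite ImM.
  move=> x.
  have h1 : {for x, continuous (fun x => complex.Re (f x) * complex.Im (g x))}.
    by apply: continuousM; [exact: f1|exact: g2].
  have h2 : {for x, continuous (fun x => complex.Im (f x) * complex.Re (g x))}.
    by apply: continuousM; [exact: f2|exact: g1].
  exact: (continuousD h1 h2).
Qed.

Lemma contC_conj f : contC f -> contC (fun x => Num.conj (f x)).
Proof.
case=> f1 f2; split.
- have -> : (fun x => complex.Re (Num.conj (f x))) = (fun x => complex.Re (f x)).
    by apply: funext => x; case: (f x).
  exact: f1.
- have -> : (fun x => complex.Im (Num.conj (f x))) = (fun x => - complex.Im (f x)).
    by apply: funext => x; case: (f x).
  by move=> x; apply: continuousN; exact: f2.
Qed.

Lemma contC_sum (I : Type) (r : seq I) (P : pred I) (F : I -> X -> C) :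
  (forall i, contC (F i)) -> contC (fun x => \sum_(i <- r | P i) F i x).
Proof.
move=> h; split.
- have -> : (fun x => complex.Re (\sum_(i <- r | P i) F i x)) =
            (fun x => \sum_(i <- r | P i) complex.Re (F i x)).
    by apply: funext => x; rewrite Re_sum.
  by apply: contR_sum => i; case: (h i).
- have -> : (fun x => complex.Im (\sum_(i <- r | P i) F i x)) =
            (fun x => \sum_(i <- r | P i) complex.Im (F i x)).
    by apply: funext => x; apply: (big_morph _ ImD).
  by apply: contR_sum => i; case: (h i).
Qed.

Definition contM p q (F : X -> 'M[C]_(p, q)) := forall a b, contC (fun x => F x a b).

Lemma contM_cst p q (A : 'M[C]_(p, q)) : contM (fun=> A).
Proof. by move=> a b; apply: contC_cst. Qed.

Lemma contM_mul p q r (F : X -> 'M[C]_(p, q)) (G : X -> 'M[C]_(q, r)) :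
  contM F -> contM G -> contM (fun x => F x *m G x).
Proof.
move=> hF hG a b.
have -> : (fun x => (F x *m G x) a b) = (fun x => \sum_j F x a j * G x j b).
  by apply: funext => x; rewrite mxE.
by apply: contC_sum => j; apply: contC_mul.
Qed.

Lemma contM_adj p q (F : X -> 'M[C]_(p, q)) : contM F -> contM (fun x => adjmx (F x)).
Proof.
move=> hF a b.
have -> : (fun x => adjmx (F x) a b) = (fun x => Num.conj (F x b a)).
  by apply: funext => x; rewrite !mxE.
exact: contC_conj.
Qed.

Lemma contM_tens p q p' q' (F : X -> 'M[C]_(p, q)) (G : X -> 'M[C]_(p', q')) :
  contM F -> contM G -> contM (fun x => F x *t G x).
Proof.
move=> hF hG a b.
have -> : (fun x => (F x *t G x) a b) = (fun x => F x (mxtens_unindex a).1 (mxtens_unindex b).1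
                 * G x (mxtens_unindex a).2 (mxtens_unindex b).2).
  by apply: funext => x; rewrite !mxE.
exact: contC_mul.
Qed.

Lemma contM_col p q (F : X -> 'M[C]_(p, q)) j : contM F -> contM (fun x => col j (F x)).
Proof.
move=> hF a b.
have -> : (fun x => col j (F x) a b) = (fun x => F x a j).
  by apply: funext => x; rewrite !mxE.
exact: hF.
Qed.

End Part6.
Section Part7.
Variable R : realType.
Local Notation C := R[i].
Variable N : nat.
Variable rho : 'M[C]_(N * N).
Variable U : 'M[C]_N.
Local Notation n := (N * N + N * N)%N.

Definition dec (x : 'rV[R]_n) : 'M[C]_N :=
  \matrix_(a, b) Complex (x 0 (lshift (N * N) (mxvec_index a b)))
                         (x 0 (rshift (N * N) (mxvec_index a b))).

Definition enc (V : 'M[C]_N) : 'rV[R]_n :=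
  row_mx (mxvec (map_mx (@complex.Re R) V)) (mxvec (map_mx (@complex.Im R) V)).

Lemma decK V : dec (enc V) = V.
Proof.
apply/matrixP => a b; rewrite mxE /enc row_mxEl row_mxEr !mxvecE !mxE.
by case: (V a b).
Qed.

Lemma contM_dec : contM dec.
Proof.
move=> a b; split.
- have -> : (fun x => complex.Re (dec x a b)) = (fun x : 'rV[R]_n => x 0 (lshift (N * N) (mxvec_index a b))).
    by apply: funext => x; rewrite mxE.
  exact: coord_continuous.
- have -> : (fun x => complex.Im (dec x a b)) = (fun x : 'rV[R]_n => x 0 (rshift (N * N) (mxvec_index a b))).
    by apply: funext => x; rewrite mxE.
  exact: coord_continuous.
Qed.

Lemma cont_joint i mu : continuous (fun x => joint_prob rho U (dec x) i mu).
Proof.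
have h : contM (fun x => adjmx (col i U *t col mu (dec x)) *m rho *m (col i U *t col mu (dec x))).
  apply: contM_mul; last by apply: contM_tens; [apply: contM_cst | apply: contM_col; apply: contM_dec].
  apply: contM_mul; last exact: contM_cst.
  apply: contM_adj; apply: contM_tens; [apply: contM_cst | apply: contM_col; apply: contM_dec].
by case: (h 0 0).
Qed.

Lemma cont_gS sg k : continuous (fun x => gS rho U sg k (dec x)).
Proof.
rewrite /gS; apply: contR_sum => mu; apply: contR_sum => j; exact: cont_joint.
Qed.

Lemma Re_conj_mul (z : C) : complex.Re (Num.conj z * z) = complex.Re z ^+ 2 + complex.Im z ^+ 2.
Proof. by case: z => a b /=; rewrite !expr2 mulNr opprK. Qed.

Lemma unitary_bound (V : 'M[C]_N) a b : unitary_mx V ->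
  -1 <= complex.Re (V a b) <= 1 /\ -1 <= complex.Im (V a b) <= 1.
Proof.
move=> hV.
have : complex.Re ((adjmx V *m V) b b) = 1 by rewrite hV mxE eqxx.
rewrite mxE Re_sum.
under eq_bigr => c _ do rewrite !mxE Re_conj_mul.
rewrite (bigD1 a) //= => hs.
have hr : 0 <= \sum_(c < N | c != a) (complex.Re (V c b) ^+ 2 + complex.Im (V c b) ^+ 2).
  by apply: sumr_ge0 => c _; apply: addr_ge0; apply: sqr_ge0.
set x := complex.Re (V a b) in hs *; set y := complex.Im (V a b) in hs *.
have hx : x ^+ 2 + y ^+ 2 <= 1 by rewrite -hs lerDl.
rewrite !expr2 in hx.
by split; apply/andP; split; nra.
Qed.

Definition unit_set : set 'rV[R]_n := fun x => unitary_mx (dec x).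

Definition hfun (x : 'rV[R]_n) : R :=
  \sum_a \sum_b (complex.Re ((adjmx (dec x) *m dec x - 1%:M) a b) ^+ 2
                + complex.Im ((adjmx (dec x) *m dec x - 1%:M) a b) ^+ 2).

Lemma cont_hfun : continuous hfun.
Proof.
have h : contM (fun x => adjmx (dec x) *m dec x - 1%:M).
  move=> a b.
  have -> : (fun x => (adjmx (dec x) *m dec x - 1%:M) a b) =
            (fun x => (adjmx (dec x) *m dec x) a b + (- (1%:M : 'M[C]_N) a b)).
    by apply: funext => x; rewrite !mxE.
  apply: contC_add; last exact: contC_cst.
  by apply: contM_mul; [apply: contM_adj; apply: contM_dec | apply: contM_dec].
rewrite /hfun; apply: contR_sum => a; apply: contR_sum => b.
case: (h a b) => h1 h2 x.
have k1 : {for x, continuous (fun x => complex.Re ((adjmx (dec x) *m dec x - 1%:M) a b) ^+ 2)}.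
  by rewrite /GRing.exp /=; apply: continuousM; apply: h1.
have k2 : {for x, continuous (fun x => complex.Im ((adjmx (dec x) *m dec x - 1%:M) a b) ^+ 2)}.
  by rewrite /GRing.exp /=; apply: continuousM; apply: h2.
exact: (continuousD k1 k2).
Qed.

Lemma unit_setE : unit_set = (fun x => hfun x = 0).
Proof.
apply: funext => x; apply: propext; rewrite /unit_set /unitary_mx /hfun /=; split.
  move=> ->; rewrite subrr; apply: big1 => a _; apply: big1 => b _.
  by rewrite mxE /= expr2 mulr0 add0r.
move=> h0; apply/eqP; rewrite -subr_eq0; apply/eqP/matrixP => a b.
have ha := @psumr_eq0P _ _ _ _ (fun c _ => sumr_ge0 _ (fun d _ => addr_ge0 (sqr_ge0 _) (sqr_ge0 _))) h0 a isT.
have hb := @psumr_eq0P _ _ _ _ (fun d _ => addr_ge0 (sqr_ge0 _) (sqr_ge0 _)) ha b isT.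
set z := (adjmx (dec x) *m dec x - 1%:M) a b in hb *.
rewrite mxE; move: hb; rewrite -/z; case: z => p q /=.
move/eqP; rewrite paddr_eq0 ?sqr_ge0 // !sqrf_eq0 => /andP [/eqP -> /eqP ->] //.
Qed.

Lemma unit_closed : closed unit_set.
Proof.
rewrite unit_setE.
apply: (@preimage_closed _ _ hfun (fun y => y = 0)); last exact: closed_eq.
by move=> x _; apply: cont_hfun.
Qed.

Lemma unit_compact : compact unit_set.
Proof.
pose B : set 'rV[R]_n := fun v => forall i, (v ord0 i) \in `[(-1 : R), 1].
have hB : compact B.
  by apply: (@rV_compact _ _ (fun _ => `[(-1 : R), 1]%classic)) => i; apply: segment_compact.
apply: (subclosed_compact unit_closed hB).
move=> x hx i; rewrite in_itv /=.
case: (splitP i) => j hj.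
- have -> : i = lshift (N * N) j by apply: val_inj.
  case: (mxvec_indexP j) => a b.
  have e : complex.Re (dec x a b) = x ord0 (lshift (N * N) (mxvec_index a b)) by rewrite mxE.
  by rewrite -e; case: (unitary_bound a b hx) => /andP [-> ->].
- have -> : i = rshift (N * N) j by apply: val_inj.
  case: (mxvec_indexP j) => a b.
  have e : complex.Im (dec x a b) = x ord0 (rshift (N * N) (mxvec_index a b)) by rewrite mxE.
  by rewrite -e; case: (unitary_bound a b hx) => _ /andP [-> ->].
Qed.

Lemma unitary1 : unitary_mx (1%:M : 'M[C]_N).
Proof. by rewrite /unitary_mx /adjmx map_scalar_mx rmorph1 tr_scalar_mx mulmx1. Qed.

Lemma max_gS (sg : {ffun 'I_N -> 'S_N}) (k : 'I_N) : exists V : 'M[C]_N, unitary_mx V /\ forall V' : 'M[C]_N, unitary_mx V' -> gS rho U sg k V' <= gS rho U sg k V.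
Proof.
have ne : exists x, unit_set x by exists (enc 1%:M); rewrite /unit_set decK; apply: unitary1.
have hct : {within unit_set, continuous (fun x => gS rho U sg k (dec x))}%classic.
  by apply: continuous_subspaceT; apply: cont_gS.
have [c hc hmax] := EVT_max_rV ne unit_compact hct.
exists (dec c); split; first exact: (set_mem hc).
move=> V' hV'; rewrite -(decK V'); apply: hmax; apply: mem_set.
by rewrite /unit_set decK.
Qed.

End Part7.
Section Part8.
Variable R : realType.
Local Notation C := R[i].

Lemma fin_max (T : finType) (t0 : T) (h : T -> R) : exists t, forall t', h t' <= h t.
Proof.
suff : forall s : seq T, exists t, forall t', t' \in s -> h t' <= h t.
  by case/(_ (enum T)) => t ht; exists t => t'; apply: ht; rewrite mem_enum.
elim => [|a s [t ht]]; first by exists t0.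
case: (leP (h a) (h t)) => hat.
- by exists t => t'; rewrite inE => /orP [/eqP ->|/ht].
- exists a => t'; rewrite inE => /orP [/eqP -> //|/ht h1].
  by apply: le_trans h1 (ltW hat).
Qed.

Lemma exists_opt N (rho : 'M[C]_(N * N)) (U : 'M[C]_N) (k : 'I_N) :
  exists V : 'M[C]_N, unitary_mx V /\
    forall V' : 'M[C]_N, unitary_mx V' ->
      psum (maj_marginal rho U V') k.+1 <= psum (maj_marginal rho U V) k.+1.
Proof.
have [Vs hVs] := fin_all_exists (fun sg => max_gS rho U sg k).
have [sg0 hmax] := fin_max [ffun => 1%g] (fun sg => gS rho U sg k (Vs sg)).
exists (Vs sg0); split; first by case: (hVs sg0).
move=> V' hV'; have [sg' ->] := gS_eq rho U k V'.
apply: le_trans (proj2 (hVs sg') V' hV') _.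
apply: le_trans (hmax sg') _.
exact: gS_le.
Qed.

End Part8.

Theorem proposition1 (R : realType) (N : nat) (N_gt0 : (0 < N)%N)
    (rho : 'M[R[i]]_(N * N)) (Hrho : density_op rho)
    (U : 'M[R[i]]_N) (HU : unitary_mx U) :
  let P := fun a => exists V : 'M[R[i]]_N, unitary_mx V /\ a = maj_marginal rho U V in
  (exists! s : 'rV[R]_N, maj_lub P s)
  /\ (forall s, maj_lub P s ->
        forall V : 'M[R[i]]_N, unitary_mx V -> majorized (maj_marginal rho U V) s)
  /\ (forall k : 'I_N, exists V : 'M[R[i]]_N, unitary_mx V /\
        forall V' : 'M[R[i]]_N, unitary_mx V' ->
          psum (maj_marginal rho U V') k.+1 <= psum (maj_marginal rho U V) k.+1)
  /\ (forall Vk : 'I_N -> 'M[R[i]]_N,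
        (forall k : 'I_N, unitary_mx (Vk k) /\
           forall V' : 'M[R[i]]_N, unitary_mx V' ->
             psum (maj_marginal rho U V') k.+1 <= psum (maj_marginal rho U (Vk k)) k.+1) ->
        forall s, maj_lub P s ->
          s = foldl (fun acc k => maj_join acc (maj_marginal rho U (Vk k)))
                    (maj_marginal rho U (Vk (Ordinal N_gt0)))
                    (behead (enum 'I_N))).
Proof.
move=> P.
have HP : forall a, P a -> prob a.
  by move=> a [V [hV ->]]; apply: desc_prob_prob; apply: maj_desc_prob.
have [s0 hs0] := lub_exists N_gt0 HP.
split.
  exists s0; split => // s' hs'; exact: maj_lub_unique hs0 hs'.
split.
  by move=> s [_ ub _] V hV; apply: ub; exists V.
split.
  by move=> k; apply: exists_opt.
move=> Vk hVk s hs.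
set f := fun k => maj_marginal rho U (Vk k).
have Hf : forall k, prob (f k).
  by move=> k; apply: desc_prob_prob; apply: maj_desc_prob => //; case: (hVk k).
set k0 := Ordinal N_gt0.
have lub0 : maj_lub (fun c => c = f k0) (f k0).
  split.
  - by apply: maj_desc_prob => //; case: (hVk k0).
  - by move=> a ->; apply: maj_refl.
  - by move=> t _ h; apply: h.
have HQ0 : forall c, c = f k0 -> prob c by move=> c ->.
have hfold := @foldl_lub R N N_gt0 _ f (behead (enum 'I_N)) _ _ HQ0 Hf lub0.
have E : enum 'I_N = k0 :: behead (enum 'I_N).
  case e: (enum 'I_N) => [|x l].
    by have := mem_enum 'I_N k0; rewrite e.
  have io : iota 0 N = 0%N :: iota 1 N.-1.
    by have := N_gt0; case: (N).
  move: (val_enum_ord N); rewrite e io /= => -[hx _].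
  by congr (_ :: _); apply: val_inj.
pose F c := exists k, c = f k.
have hF1 : maj_lub F (foldl (fun acc k => maj_join acc (f k)) (f k0) (behead (enum 'I_N))).
  apply: maj_lub_ext hfold => c; split.
  - by case=> [->|[k _ ->]]; exists k0 + exists k.
  - case=> k ->; have : k \in enum 'I_N by rewrite mem_enum.
    rewrite E inE => /orP [/eqP ->|hk]; first by left.
    by right; exists k.
have hF2 : maj_lub F s.
  case: hs => sd sub sl; split => //.
  - by move=> c [k ->]; apply: sub; exists (Vk k); split => //; case: (hVk k).
  - move=> t td hub; apply: sl => // a [V [hV ->]]; split; last first.
      by rewrite psum_tot ?psum_tot //; [apply: desc_prob_prob | apply: HP; exists V].
    case=> [|m] hm; first by rewrite !psum0.
    have [_ hopt] := hVk (Ordinal hm).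
    apply: le_trans (hopt V hV) _.
    by case: (hub (f (Ordinal hm))) => [|h _]; [exists (Ordinal hm) | apply: h].
exact: maj_lub_unique hF2 hF1.
Qed.
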